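(* Let $p$ be an odd prime and $i$ an integer with $1\leq i<p-1$. For an integer $1\leq l\leq i+1$ set \[G_i(l)=\sum_{k=1}^l(-1)^{k-1}(k-1)!{l \brace k}_{\leq i}+\frac{p\cdot l!}{(l+p-1)!}{l+p-1 \brace p}_{\leq i}.\] Then $G_i(l)\in\mathbb{Z}_{(p)}$ with $G_i(l)\equiv -1\pmod p$ if $l=i+1$, and $G_i(l)\equiv 0\pmod p$ if $l\leq i$ (i.e. $G_i(l)=-1+O(p)$, resp. $O(p)$).
   Context: For integers $N\geq k\geq 0$ and $r\geq1$, the $r$-restricted Stirling number of the second kind is ${N \brace k}_{\leq r}=\sum \frac{N!}{\prod_{m=1}^{r} j_m!\,(m!)^{j_m}}$, the sum over $(j_1,\dots,j_r)\in\mathbb{N}^r$ with $\sum_m j_m=k$ and $\sum_m m j_m=N$; equivalently the number of partitions of an $N$-element set into $k$ nonempty blocks each of size at most $r$. $O(p)$ means an element of $p\mathbb{Z}_{(p)}$. *)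

(* Defs.v *)
From mathcomp Require Import all_boot all_order all_algebra.
Set Implicit Arguments. Unset Strict Implicit. Unset Printing Implicit Defensive.
Import Order.TTheory GRing.Theory Num.Theory.

Definition rstirling (N k r : nat) : nat :=
  #|[set P : {set {set 'I_N}} |
      [&& partition P [set: 'I_N], #|P| == k & [forall B in P, #|B| <= r]]]|.

Local Open Scope ring_scope.

Definition in_Zloc (p : nat) (x : rat) : Prop :=
  exists (a b : int), ~~ (p%:Z %| b)%Z /\ x = a%:~R / b%:~R.

Definition O_p (p : nat) (x : rat) : Prop :=
  exists (a b : int), ~~ (p%:Z %| b)%Z /\ x = p%:R * a%:~R / b%:~R.

Definition G (p i l : nat) : rat :=
  \sum_(1 <= k < l.+1) (-1) ^+ k.-1 * (k.-1)`!%:R * (rstirling l k i)%:R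
  + p%:R * l`!%:R / (l + p - 1)`!%:R * (rstirling (l + p - 1) p i)%:R.

(* Main.v *)
Require Import Defs.
From mathcomp Require Import all_boot all_order all_algebra all_fingroup all_solvable.
From mathcomp Require Import zify ring.
Set Implicit Arguments. Unset Strict Implicit. Unset Printing Implicit Defensive.
Import GRing.Theory Num.Theory.

Section Gen.
Variable T : finType.
Implicit Types (A : {set T}) (P Q : {set {set T}}).

Definition PS A k := [set P : {set {set T}} | partition P A && (#|P| == k)].

Lemma card_part_le P A : partition P A -> #|P| <= #|A|.
Proof.
move=> pP; rewrite (card_partition pP) -sum1_card leq_sum // => B BP.
by rewrite card_gt0 (partition_neq0 pP BP).
Qed.

Lemma PS_big A k : #|A| < k -> PS A k = set0.
Proof.
move=> lt; apply/setP => P; rewrite !inE; apply/negbTE/negP => /andP[pP /eqP e].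
by have := card_part_le pP; rewrite e leqNgt lt.
Qed.

Lemma PS0 A : A != set0 -> PS A 0 = set0.
Proof.
move=> nA; apply/setP => P; rewrite !inE; apply/negbTE/negP => /andP[pP /eqP/cards0_eq e].
by move: pP; rewrite e => /and3P[/eqP c _ _]; move: nA; rewrite -c /cover big_set0 eqxx.
Qed.

Lemma part1 P A : partition P A -> #|P| = 1 -> P = [set A].
Proof.
move=> pP /eqP/cards1P[B eB]; move: pP; rewrite eB => /and3P[/eqP c _ _].
by rewrite -c cover1.
Qed.

Lemma PS1 A : A != set0 -> PS A 1 = [set [set A]].
Proof.
move=> nA; apply/setP => P; rewrite !inE; apply/andP/eqP => [[pP /eqP e]|->].
  exact: part1 pP e.
split; last by rewrite cards1.
by rewrite /partition cover1 eqxx trivIset1 inE eq_sym nA.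
Qed.

Lemma card_PS1 A : A != set0 -> #|PS A 1| = 1.
Proof. by move=> nA; rewrite PS1 // cards1. Qed.

End Gen.

Section Rec.
Variable T : finType.
Implicit Types (B : {set T}) (P Q : {set {set T}}).
Variables (x : T) (A : {set T}).
Hypothesis hx : x \notin A.

Definition g (QB : {set {set T}} * {set T}) := (x |: QB.2) |: (QB.1 :\ QB.2).
Definition h P := ((pblock P x :\ x) |: (P :\ pblock P x), pblock P x :\ x).
Definition Dom k := [set QB : {set {set T}} * {set T} | (QB.1 \in PS A k) && (QB.2 \in QB.1)].
Definition X2 k := [set P in PS (x |: A) k | [set x] \notin P].

Lemma card_Dom k : #|Dom k| = k * #|PS A k|.
Proof.
rewrite -sum1_card /Dom.
rewrite (eq_bigl (fun QB => (QB.1 \in PS A k) && (QB.2 \in QB.1))); last by move=> QB; rewrite inE.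
rewrite -(pair_big_dep (fun Q => Q \in PS A k) (fun Q B => B \in Q) (fun _ _ => 1)) /=.
rewrite mulnC -sum_nat_const; apply: eq_bigr => Q.
by rewrite inE => /andP[_ /eqP <-]; rewrite sum1_card.
Qed.

Lemma g_facts Q B : partition Q A -> B \in Q ->
  [/\ partition (g (Q, B)) (x |: A), #|g (Q, B)| = #|Q|, [set x] \notin g (Q, B)
    & x |: B \notin Q :\ B].
Proof.
move=> pQ BQ; have BA := partitionS pQ BQ.
have nxQ : forall C, C \in Q -> x \notin C.
  by move=> C CQ; apply: contra hx; apply: subsetP; apply: partitionS pQ CQ.
have nxB := nxQ B BQ.
have xBQ : x |: B \notin Q :\ B.
  by apply/negP => /setD1P[_ /nxQ]; rewrite setU11.
split => //.
- have := partitionU1 (partitionD1 pQ BQ) (B := x |: B).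
  have -> : (x |: B) :|: (A :\: B) = x |: A.
    apply/setP => y; rewrite !inE; have := subsetP BA y.
    by case: (y == x); case: (y \in B); case: (y \in A) => //= ->.
  apply.
    by apply/set0Pn; exists x; rewrite setU11.
  rewrite -setI_eq0; apply/eqP/setP => y; rewrite !inE.
  by case: eqP => [->|_] /=; [rewrite (negbTE hx) !andbF | case: (y \in B)].
- rewrite /g /= cardsU1 xBQ (cardsD1 B Q) BQ //.
- rewrite /g /= !inE negb_or; apply/andP; split.
    apply/negP => /eqP e; have : x \in B; last by rewrite (negbTE nxB).
    have /set0Pn[y yB] := partition_neq0 pQ BQ.
    have : y \in [set x] by rewrite e inE yB orbT.
    by rewrite inE => /eqP <-.
  apply/negP => /andP[_ /nxQ]; rewrite inE eqxx //.
Qed.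

Lemma h_facts P : partition P (x |: A) -> [set x] \notin P ->
  let Bx := pblock P x in let B := Bx :\ x in
  [/\ Bx \in P, x \in Bx, B != set0, B \notin P :\ Bx
    & partition (B |: (P :\ Bx)) A].
Proof.
move=> pP nxP Bx B.
have xc : x \in cover P by rewrite (cover_partition pP) setU11.
have BxP : Bx \in P by apply: pblock_mem.
have xBx : x \in Bx by rewrite mem_pblock.
have Bn0 : B != set0.
  apply/negP => /eqP e; move: nxP; suff -> : [set x] = Bx by rewrite BxP.
  by rewrite -(setD1K xBx) -/B e setU0.
have BxA := partitionS pP BxP.
have nBP : B \notin P :\ Bx.
  apply/negP => /setD1P[nB BP].
  have := trivIsetP (partition_trivIset pP) _ _ BP BxP nB.
  have /set0Pn[y yB] := Bn0.
  rewrite -setI_eq0 => /eqP/setP/(_ y); rewrite inE yB (subsetP (subD1set Bx x) y yB) inE //.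
split => //.
have := partitionU1 (partitionD1 pP BxP) Bn0.
have -> : B :|: ((x |: A) :\: Bx) = A.
  apply/setP => y; rewrite !inE; have := subsetP BxA y; rewrite !inE.
  case: (eqVneq y x) => [->|nyx] /=; first by rewrite xBx (negbTE hx).
  by case: (y \in Bx); case: (y \in A) => // ->.
apply; rewrite -setI_eq0; apply/eqP/setP => y; rewrite !inE.
by case: (y \in Bx); rewrite ?andbF.
Qed.


Lemma hg Q B : partition Q A -> B \in Q -> h (g (Q, B)) = (Q, B).
Proof.
move=> pQ BQ; have [pg _ _ xBQ] := g_facts pQ BQ.
have nxB : x \notin B by apply: contra hx; apply: subsetP; apply: partitionS pQ BQ.
rewrite /h; have -> : pblock (g (Q, B)) x = x |: B.
  by apply: def_pblock; rewrite ?setU11 ?(partition_trivIset pg).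
by rewrite /h /g /= !setU1K // setD1K.
Qed.

Lemma gh P : partition P (x |: A) -> [set x] \notin P -> g (h P) = P.
Proof.
move=> pP nxP; have [BxP xBx _ nBP _] := h_facts pP nxP.
by rewrite /h /g /= setD1K // setU1K // setD1K.
Qed.

Lemma PS_rec k : #|PS (x |: A) k.+1| = k.+1 * #|PS A k.+1| + #|PS A k|.
Proof.
rewrite -(cardsID [set P : {set {set T}} | [set x] \in P] (PS (x |: A) k.+1)) addnC.
congr (_ + _).
  rewrite -card_Dom.
  have -> : PS (x |: A) k.+1 :\: [set P : {set {set T}} | [set x] \in P] = g @: Dom k.+1.
    apply/setP => P; rewrite !inE; apply/idP/imsetP.
      case/andP => nxP /andP[pP /eqP cP].
      have [BxP xBx Bn0 nBP pB] := h_facts pP nxP.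
      exists (h P); last by rewrite gh.
      rewrite inE /= inE pB setU11 andbT /=.
      by rewrite cardsU1 nBP -cP (cardsD1 (pblock P x) P) BxP.
    case=> [[Q B]]; rewrite inE /= inE => /andP[/andP[pQ /eqP cQ] BQ] ->.
    have [pg cg ng _] := g_facts pQ BQ.
    by rewrite ng pg cg cQ eqxx.
  apply: card_in_imset => [[Q1 B1] [Q2 B2]]; rewrite !inE /=.
  move=> /andP[/andP[pQ1 _] B1Q] /andP[/andP[pQ2 _] B2Q] e.
  by rewrite -(hg pQ1 B1Q) e hg.
have -> : PS (x |: A) k.+1 :&: [set P : {set {set T}} | [set x] \in P] = (fun Q => [set x] |: Q) @: PS A k.
  apply/setP => P; rewrite !inE; apply/idP/imsetP.
    case/andP => /andP[pP /eqP cP] xP.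
    exists (P :\ [set x]); last by rewrite setD1K.
    rewrite inE; have := partitionD1 pP xP; rewrite setU1K // => ->.
    by move: cP; rewrite (cardsD1 [set x] P) xP add1n => -[->]; rewrite eqxx.
  case=> Q; rewrite inE => /andP[pQ /eqP cQ] ->.
  have nxQ : [set x] \notin Q.
    by apply/negP => /(partitionS pQ) /subsetP /(_ x); rewrite inE eqxx (negbTE hx) => /(_ isT).
  rewrite setU11 andbT cardsU1 nxQ cQ eqxx andbT.
  apply: partitionU1 => //; first by apply/set0Pn; exists x; rewrite inE.
  by rewrite disjoints1.
apply: card_in_imset => Q1 Q2; rewrite !inE => /andP[pQ1 _] /andP[pQ2 _] e.
have nx : forall Q, partition Q A -> [set x] \notin Q.
  by move=> Q pQ; apply/negP => /(partitionS pQ) /subsetP /(_ x); rewrite inE eqxx (negbTE hx) => /(_ isT).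
by rewrite -(setU1K (nx _ pQ1)) e setU1K // nx.
Qed.

End Rec.

Lemma modS_small x p : (x < p)%N -> (x.+1 %% p = if x.+1 == p then 0 else x.+1)%N.
Proof.
move=> xp; case: eqP => [->|ne]; first by rewrite modnn.
by rewrite modn_small //; lia.
Qed.

Section Rot.
Variables (p N : nat).
Hypothesis pN : (p <= N)%N.
Hypothesis p0 : (0 < p)%N.

Definition rotf (x : 'I_N) : 'I_N :=
  if (x < p)%N then insubd x (if x.+1 == p then 0 else x.+1)%N else x.

Lemma rotfE x : val (rotf x) = if (x < p)%N then (if x.+1 == p then 0 else x.+1)%N else val x.
Proof.
rewrite /rotf; case: ifP => // xp; rewrite val_insubd.
case: eqP => [e|ne]; rewrite ifT //; lia.
Qed.

Lemma rotf_inj : injective rotf.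
Proof.
move=> x y e; apply: val_inj; have := congr1 val e; rewrite !rotfE /=.
by case: (ltnP x p) => xp; case: (ltnP y p) => yp; case: (eqVneq x.+1 p) => ex; case: (eqVneq y.+1 p) => ey; lia.
Qed.

Lemma iter_rotf (c : 'I_N) m : (c < p)%N -> val (iter m rotf c) = ((c + m) %% p)%N.
Proof.
move=> cp; elim: m => [|m IH]; first by rewrite addn0 modn_small.
rewrite iterS rotfE /= IH ltn_pmod // addnS.
have -> : ((c + m).+1 %% p = ((c+m) %% p).+1 %% p)%N by rewrite -[(c + m).+1]addn1 -[((c + m) %% p).+1]addn1 modnDml.
by rewrite modS_small ?ltn_pmod.
Qed.

Lemma iter_rotf_fix (c : 'I_N) m : (p <= c)%N -> iter m rotf c = c.
Proof.
move=> pc; elim: m => [|m IH] //; rewrite iterS IH; apply: val_inj.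
by rewrite rotfE ltnNge pc.
Qed.

Definition rsig := perm rotf_inj.

Lemma sig_p : (rsig ^+ p = 1)%g.
Proof.
apply/permP => x; rewrite permX perm1 (eq_iter (permE rotf_inj)).
case: (ltnP x p) => xp; last by rewrite iter_rotf_fix.
by apply: val_inj; rewrite iter_rotf // modnDr modn_small.
Qed.

End Rot.

Section Act.
Variable N : nat.
Local Notation to := (('P^*)^* : action [set: {perm 'I_N}] {set {set 'I_N}})%act.

Lemma toE (P : {set {set 'I_N}}) (s : {perm 'I_N}) :
  to P s = [set [set s y | y in B] | B : {set 'I_N} in P].
Proof. by rewrite /= !setactE; apply: eq_imset => B; rewrite /= setactE. Qed.

Lemma to1E (B : {set 'I_N}) (s : {perm 'I_N}) :
  ('P^*)%act B s = [set s y | y in B].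
Proof. by rewrite /= setactE. Qed.
End Act.

Section Div.
Variables (p N i : nat).
Hypotheses (pp : prime p) (pN : (p < N)%N) (ip : (i < p)%N).
Let pN' : (p <= N)%N := ltnW pN.
Let p0 : (0 < p)%N := prime_gt0 pp.
Local Notation to := (('P^*)^* : action [set: {perm 'I_N}] {set {set 'I_N}})%act.
Local Notation s := (rsig pN' p0).

Definition Xs := [set P : {set {set 'I_N}} |
      [&& partition P [set: 'I_N], #|P| == p & [forall B in P, #|B| <= i]]].

Lemma imsetT_perm (t : {perm 'I_N}) : [set t y | y in [set: 'I_N]] = [set: 'I_N].
Proof.
by apply/eqP; rewrite eqEcard subsetT /= card_imset //; exact: perm_inj.
Qed.

Lemma Xs_inv (t : {perm 'I_N}) P : P \in Xs -> to P t \in Xs.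
Proof.
rewrite !inE toE => /and3P[pP cP bP].
have e := imset_partition P [set: 'I_N] (@perm_inj _ t).
rewrite imsetT_perm in e; rewrite e pP /=.
rewrite card_imset ?cP /=; last exact: imset_inj (@perm_inj _ t).
apply/forall_inP => _ /imsetP[B BP ->]; rewrite card_imset; last exact: perm_inj.
exact: (forall_inP bP).
Qed.

Lemma pG : pgroup p <[s]>%g.
Proof. by apply: pnat_dvd (pnat_id pp); rewrite order_dvdn sig_p. Qed.

Lemma no_fix P : partition P [set: 'I_N] -> #|P| = p -> (forall B, B \in P -> #|B| <= i)%N ->
  to P s = P -> False.
Proof.
move=> pP cP bP fP.
have tP : forall B, B \in P -> ('P^*)%act B s \in P.
  move=> B BP; rewrite to1E; suff : [set s y | y in B] \in to P s by rewrite fP.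
  by rewrite toE; apply: imset_f.
have acts2 : [acts <[s]>%g, on P | 'P^*].
  rewrite cycle_subG !inE /=; apply/subsetP => B BP; rewrite inE; exact: tP.
have := pgroup_fix_mod pG acts2; rewrite afix_cycle.
set F := (P :&: _) => eF.
have cov : forall y, y \in cover P by move=> y; rewrite (cover_partition pP) inE.
have fixB : forall B, B \in P -> ('P^*)%act B s = B -> B \in F.
  by move=> B BP eB; rewrite inE BP; apply/afix1P.
pose y0 : 'I_N := Ordinal pN.
have sy0 : s y0 = y0.
  by apply: val_inj; rewrite permE (rotfE pN' p0) /= ltnn.
have BxP := pblock_mem (cov y0).
have eBx : ('P^*)%act (pblock P y0) s = pblock P y0.
  apply/esym/def_pblock; [exact: partition_trivIset pP | exact: tP |].
  by rewrite to1E; apply/imsetP; exists y0; rewrite ?mem_pblock ?cov ?sy0.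
have FP : F \subset P by apply: subsetIl.
have cF : #|F| = p.
  apply/eqP; rewrite eqn_leq -{1}cP subset_leq_card //=.
  apply: dvdn_leq; first by rewrite card_gt0; apply/set0Pn; exists (pblock P y0); apply: fixB.
  by move: eF; rewrite cP modnn => e; rewrite /dvdn -e.
have eFP : F = P by apply/eqP; rewrite eqEcard; apply/andP; split => //; rewrite cF cP.
have N0 : (0 < N)%N by apply: leq_ltn_trans pN.
pose c0 : 'I_N := Ordinal N0.
have B0P := pblock_mem (cov c0).
have : pblock P c0 \in F by rewrite eFP.
rewrite inE => /andP[_ /afix1P eB0].
have cl : forall y, y \in pblock P c0 -> rotf p y \in pblock P c0.
  move=> y yB; suff : s y \in ('P^*)%act (pblock P c0) s by rewrite eB0 permE.
  by rewrite to1E; apply: imset_f.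
have it : forall m, iter m (@rotf p N) c0 \in pblock P c0.
  by elim=> [|m IH] /=; [rewrite mem_pblock cov | apply: cl].
have : (p <= #|pblock P c0|)%N.
  have <- : #|[set iter (val m) (@rotf p N) c0 | m : 'I_p]| = p.
    rewrite card_imset ?card_ord // => m1 m2 e.
    apply: val_inj; have := congr1 val e; rewrite !(iter_rotf pN' p0) //=.
    by rewrite !add0n !modn_small.
  by apply: subset_leq_card; apply/subsetP => _ /imsetP[m _ ->].
have := bP _ B0P; lia.
Qed.

Lemma p_dvd_rst : (p %| rstirling N p i)%N.
Proof.
have acts1 : [acts <[s]>%g, on Xs | to].
  by rewrite cycle_subG !inE /=; apply/subsetP => P PX; rewrite inE; exact: Xs_inv.
have := pgroup_fix_mod pG acts1; rewrite afix_cycle.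
have -> : ('Fix_(Xs | to)[s])%g = set0.
  apply/setP => P; rewrite in_setI in_set0; apply/negbTE/negP => /andP[PX /afix1P fP].
  move: PX; rewrite inE => /and3P[pP /eqP cP /forall_inP bP]; exact: no_fix pP cP bP fP.
by rewrite cards0 mod0n => e; rewrite /dvdn -e.
Qed.
End Div.

Lemma fact_split p l : prime p -> (1 <= l)%N -> (l < p)%N ->
  exists u, (l + p - 1)`! = (p * u)%N /\ ~~ (p %| u)%N.
Proof.
move=> pp l1 lp; set N := (l + p - 1)%N.
have p1 := prime_gt1 pp; have p0 := prime_gt0 pp.
have lg : logn p N`! = 1%N.
  rewrite logn_fact // big_ltn; last by rewrite /N; lia.
  rewrite big_nat big1 ?addn0.
    rewrite expn1 (_ : N = 1 * p + (l - 1))%N; last by rewrite /N; lia.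
    by rewrite divnMDl // divn_small ?addn0 //; lia.
  move=> k /andP[k2 _]; apply: divn_small.
  apply: (@leq_trans (p ^ 2)); last by rewrite leq_pexp2l.
  rewrite /N expnS expn1; nia.
have dN : (p %| N`!)%N by rewrite -[p]expn1 pfactor_dvdn ?fact_gt0 ?lg.
exists (N`! %/ p); split; first by rewrite mulnC divnK.
apply/negP => /dvdnP[q eq].
have : (p ^ 2 %| N`!)%N.
  by rewrite -(divnK dN) eq -mulnA expnS expn1; apply: dvdn_mull.
by rewrite pfactor_dvdn ?fact_gt0 // lg.
Qed.

Lemma rst_diag n i : (1 <= i)%N -> rstirling n n i = 1%N.
Proof.
move=> i1; set Q := [set [set y] | y : 'I_n].
have cQ : #|Q| = n by rewrite card_imset ?card_ord //; exact: set1_inj.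
have pQ : partition Q [set: 'I_n].
  apply/and3P; split.
  - rewrite cover_imset; apply/eqP/setP => y; rewrite inE; apply/bigcupP.
    by exists y => //; rewrite inE.
  - apply/trivIsetP => _ _ /imsetP[a _ ->] /imsetP[b _ ->] nab.
    by rewrite disjoints1 inE; apply: contra nab => /eqP ->.
  - apply/imsetP => -[y _ e]; have : y \in (set0 : {set 'I_n}) by rewrite e inE.
    by rewrite inE.
rewrite /rstirling; apply/eqP/cards1P; exists Q; apply/setP => P; rewrite !inE.
apply/idP/eqP => [|->]; last first.
  by rewrite pQ cQ eqxx /=; apply/forall_inP => _ /imsetP[y _ ->]; rewrite cards1.
case/and3P => pP /eqP cP _.
have b1 : forall B, B \in P -> #|B| = 1%N.
  move=> B BP; apply/eqP; rewrite eqn_leq card_gt0 (partition_neq0 pP BP) andbT.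
  rewrite leqNgt; apply/negP => B2.
  have := card_partition pP; rewrite cardsT card_ord (bigD1 B) //=.
  have : (\sum_(C in P | C != B) 1 <= \sum_(C in P | C != B) #|C|)%N.
    by apply: leq_sum => C /andP[CP _]; rewrite card_gt0 (partition_neq0 pP CP).
  have s1 : (\sum_(C in P) 1 = 1 + \sum_(C in P | C != B) 1)%N by rewrite (bigD1 B).
  rewrite sum1_card in s1; move: s1; set a := \sum_(C in P | C != B) 1; set b := \sum_(C in P | C != B) #|C|; move=> h1 h2 h3; clearbody a b; rewrite cP in h1; have := leq_add B2 h2; rewrite -h3 h1 add1n ltnn.
  by [].
apply/setP; apply/subset_cardP; first by rewrite cP cQ.
apply/subsetP => B BP.
have /eqP/cards1P[y ->] := b1 B BP; exact: imset_f.
Qed.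

Local Open Scope ring_scope.

Lemma alt_sum (T : finType) (A : {set T}) M : A != set0 -> (#|A| < M)%N ->
  \sum_(1 <= k < M) (-1) ^+ k.-1 * (k.-1)`!%:R * (#|PS A k|)%:R
  = ((#|A| == 1)%N)%:R :> rat.
Proof.
move=> nA ltM.
have MA : (1 < M)%N by apply: leq_ltn_trans ltM; rewrite card_gt0.
case: (eqVneq #|A| 1%N) => [A1|An1].
  rewrite big_ltn //= card_PS1 // big_nat big1 ?addr0 ?mulr1 //.
  by move=> k /andP[k1 _]; rewrite PS_big ?cards0 ?mulr0 // A1.
have /set0Pn[x xA] := nA.
set A' := A :\ x.
have hx : x \notin A' by rewrite !inE eqxx.
have eA : A = x |: A' by rewrite setD1K.
have cA : #|A| = #|A'|.+1 by rewrite (cardsD1 x A) xA.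
have nA' : A' != set0.
  by rewrite -card_gt0; move: An1 (card_gt0 A); rewrite nA cA; case: #|A'|.
rewrite big_add1 /= eA.
rewrite (@telescope_sumr_eq _ _ _ (fun j => - ((-1) ^+ j * j`!%:R * (#|PS A' j|)%:R : rat))) //.
- have hM : (#|A'| < M.-1)%N by rewrite cA in ltM; lia.
  by rewrite PS0 // cards0 mulr0 oppr0 subr0 PS_big ?cards0 ?mulr0 ?oppr0.
move=> j _; rewrite PS_rec // natrD natrM factS natrM exprS; ring.
Qed.

Local Open Scope ring_scope.

Lemma rst_unres N k r : (N <= r)%N -> rstirling N k r = #|PS [set: 'I_N] k|.
Proof.
move=> Nr; rewrite /rstirling /PS; apply: eq_card => P; rewrite !inE.
case: (partition _ _) (_ == _) => [] [] //=; apply/forall_inP => B _.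
by apply: leq_trans Nr; rewrite -[X in (_ <= X)%N](card_ord N) max_card.
Qed.

Lemma rst_top i k : (rstirling i.+1 k i)%:R = (#|PS [set: 'I_i.+1] k|)%:R - ((k == 1)%N)%:R :> rat.
Proof.
have nT : [set: 'I_i.+1] != set0 by apply/set0Pn; exists ord0.
case: (eqVneq k 1%N) => [->|k1].
  rewrite card_PS1 // subrr; apply/eqP; rewrite pnatr_eq0 cards_eq0; apply/eqP/setP => P.
  rewrite !inE; apply/negbTE/negP => /and3P[pP /eqP cP /forall_inP bP].
  have := bP [set: 'I_i.+1]; rewrite (part1 pP cP) inE eqxx cardsT card_ord ltnn.
  by move=> /(_ isT).
rewrite subr0 /rstirling /PS; congr (_%:R); apply: eq_card => P; rewrite !inE.
apply/and3P/andP => [[]//|[pP cP]]; split => //; apply/forall_inP => B BP.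
rewrite leqNgt; apply/negP => Bi.
have eB : B = [set: 'I_i.+1].
  by apply/eqP; rewrite eqEcard subsetT cardsT card_ord.
have : P = [set B].
  apply/eqP; rewrite eqEsubset sub1set BP andbT; apply/subsetP => C CP.
  rewrite inE; apply/negPn/negP => nCB.
  have := trivIsetP (partition_trivIset pP) _ _ CP BP nCB.
  rewrite eB -setI_eq0 setIT => /eqP C0.
  by move: (partition_neq0 pP CP); rewrite C0 eqxx.
by move=> eP; move: cP; rewrite eP cards1 eq_sym (negbTE k1).
Qed.

Definition T1 (i l : nat) : rat :=
  \sum_(1 <= k < l.+1) (-1) ^+ k.-1 * (k.-1)`!%:R * (rstirling l k i)%:R.

Lemma T1_low i l : (1 <= l)%N -> (l <= i)%N -> T1 i l = ((l == 1)%N)%:R.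
Proof.
move=> l1 li; rewrite /T1.
under eq_bigr do rewrite rst_unres //.
have nT : [set: 'I_l] != set0 by apply/set0Pn; exists (Ordinal l1).
by rewrite alt_sum // cardsT card_ord.
Qed.

Lemma T1_top i : (1 <= i)%N -> T1 i i.+1 = -1.
Proof.
move=> i1; rewrite /T1.
under eq_bigr do rewrite rst_top mulrBr.
have nT : [set: 'I_i.+1] != set0 by apply/set0Pn; exists ord0.
rewrite sumrB alt_sum // ?cardsT ?card_ord //.
have -> : (i.+1 == 1)%N = false by rewrite eqSS; case: (i) i1.
rewrite big_ltn // /= big_nat big1 ?addr0; first by rewrite sub0r !mul1r.
by move=> k /andP[k1 _]; rewrite (gtn_eqF k1) mulr0.
Qed.

Local Open Scope ring_scope.

Lemma O_p_in p x : O_p p x -> in_Zloc p x.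
Proof.
case=> a [b [pb ->]]; exists (p%:Z * a), b; split => //.
by rewrite intrM -pmulrn.
Qed.

Lemma in_Zloc_sub1 p x : in_Zloc p x -> in_Zloc p (x - 1).
Proof.
case=> a [b [pb ->]]; exists (a - b), b; split => //.
have b0 : b%:~R != 0 :> rat.
  by rewrite intr_eq0; apply: contraNneq pb => ->; rewrite dvdz0.
by rewrite intrB; field.
Qed.

Lemma natz_dvd p u : ~~ (p %| u)%N -> ~~ (p%:Z %| u%:Z)%Z.
Proof. by rewrite dvdzE. Qed.

Lemma key p i l : prime p -> (1 <= i)%N -> (i < p - 1)%N ->
  (1 <= l)%N -> (l <= i.+1)%N -> O_p p (G p i l + ((l == i.+1)%N)%:R).
Proof.
move=> pp i1 ip l1 li.
have p1 := prime_gt1 pp.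
have lp : (l < p)%N by lia.
have [u [eu pu]] := fact_split pp l1 lp.
have u0 : u%:R != 0 :> rat by rewrite pnatr_eq0; apply: contraNneq pu => ->; rewrite dvdn0.
have p0 : p%:R != 0 :> rat by rewrite pnatr_eq0; lia.
have GE : G p i l = T1 i l + p%:R * l`!%:R / (l + p - 1)`!%:R * (rstirling (l + p - 1) p i)%:R by [].
case: (eqVneq l 1%N) => [el|l2].
  subst l.
  have [k ek] : exists k, (((p.-1)`!).+1 = k * p)%N.
    by apply/dvdnP; rewrite -Wilson.
  have fp : ~~ (p %| (p.-1)`!)%N.
    apply/negP => d; have : (p %| ((p.-1)`!).+1)%N by rewrite -Wilson.
    by rewrite -addn1 dvdn_addr // dvdn1; lia.
  have f0 : ((p.-1)`!)%:R != 0 :> rat by rewrite pnatr_eq0; apply: contraNneq fp => ->; rewrite dvdn0.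
  exists k%:Z, ((p.-1)`!)%:Z; split; first exact: natz_dvd.
  rewrite -!pmulrn GE T1_low // addKn rst_diag //.
  have -> : (1 == i.+1)%N = false by rewrite eqSS; lia.
  have -> : p`! = (p * (p.-1)`!)%N by rewrite -{1}(prednK (prime_gt0 pp)) factS prednK // prime_gt0.
  have ek' : ((p.-1)`!)%:R + 1 = k%:R * p%:R :> rat by rewrite -natrM -ek -addn1 natrD.
  rewrite natrM /= addr0 (_ : 1`! = 1%N) // [p%:R * k%:R]mulrC -ek'.
  by field; rewrite f0 p0.
have pN : (p < l + p - 1)%N by lia.
have ipp : (i < p)%N by lia.
have [s es] := dvdnP (p_dvd_rst pp pN ipp).
have T1E : T1 i l = - ((l == i.+1)%N)%:R.
  case: (eqVneq l i.+1) => [->|nl]; first by rewrite T1_top.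
  by rewrite T1_low //; [rewrite (negbTE l2) oppr0 | lia].
exists (l`! * s)%:Z, u%:Z; split; first exact: natz_dvd.
rewrite -!pmulrn GE T1E es eu !natrM.
by field; rewrite u0 p0.
Qed.

Unset Implicit Arguments.
Theorem proposition3p17 (p i l : nat) :
  prime p -> odd p -> (1 <= i)%N -> (i < p - 1)%N ->
  (1 <= l)%N -> (l <= i.+1)%N ->
  in_Zloc p (G p i l) /\
  (l = i.+1 -> O_p p (G p i l + 1)) /\
  ((l <= i)%N -> O_p p (G p i l)).
Proof.
move=> pp _ i1 ip l1 li.
have K := key pp i1 ip l1 li.
split; last split.
- case: (eqVneq l i.+1) => [el|nl].
    move: K; rewrite el eqxx => /O_p_in /in_Zloc_sub1; rewrite addrK.
    by rewrite -el.
  by move: K; rewrite (negbTE nl) addr0 => /O_p_in.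
- by move=> el; move: K; rewrite el eqxx -el.
- move=> lei; move: K; rewrite (_ : (l == i.+1)%N = false) ?addr0 //; lia.
Qed.
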